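(* Let $A\in\mathbb{R}^{n\times n}$ have rank one. Then $A$ is a Karamardian matrix if and only if its group inverse $A^{\#}$ (which exists in this case) is a Karamardian matrix. Moreover, in this case both $A$ and $A^{\#}$ are range monotone.
   Context: The group inverse $A^{\#}$ of a square $A$ is the unique $X$ (if it exists) with $AXA=A$, $XAX=X$, $AX=XA$. A square matrix $M$ is range monotone if $Mx\ge 0$ and $x\in R(M)$ imply $x\ge 0$. For $A\in\mathbb{R}^{n\times n}$ let $K_A=\mathbb{R}^n_+\cap R(A)$ and $K_A^*=\{y\in\mathbb{R}^n: x^Ty\ge 0 \text{ for all } x\in K_A\}$ (one has $K_A^*=\mathbb{R}^n_++N(A^T)$, and its interior is $\{a+b: a>0,\ b\in N(A^T)\}$). For $q\in\mathbb{R}^n$, LCP$(A,K_A,q)$ is to find $x$ with $x\in K_A$, $Ax+q\in K_A^*$, $x^T(Ax+q)=0$. $A$ is a Karamardian matrix if $K_A\ne\{0\}$ and there exists $d$ in the interior of $K_A^*$ such that both LCP$(A,K_A,0)$ and LCP$(A,K_A,d)$ have $x=0$ as their only solution. *)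

(* Defs.v *)
From mathcomp Require Import all_boot all_order all_algebra.
From mathcomp Require Import reals.
Set Implicit Arguments. Unset Strict Implicit. Unset Printing Implicit Defensive.
Import Order.TTheory GRing.Theory Num.Theory.
Local Open Scope ring_scope.

Section KaramardianDefs.
Variables (R : realType) (n : nat).

Definition nonneg_vec (x : 'cV[R]_n) : Prop := forall i, 0 <= x i 0.
Definition pos_vec (x : 'cV[R]_n) : Prop := forall i, 0 < x i 0.
Definition in_range (A : 'M[R]_n) (x : 'cV[R]_n) : Prop :=
  exists y : 'cV[R]_n, x = A *m y.
Definition in_null_tr (A : 'M[R]_n) (b : 'cV[R]_n) : Prop := A^T *m b = 0.

Definition is_group_inverse (A X : 'M[R]_n) : Prop :=
  A *m X *m A = A /\ X *m A *m X = X /\ A *m X = X *m A.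

Definition range_monotone (M : 'M[R]_n) : Prop :=
  forall x : 'cV[R]_n, nonneg_vec (M *m x) -> in_range M x -> nonneg_vec x.

Definition in_KA (A : 'M[R]_n) (x : 'cV[R]_n) : Prop :=
  nonneg_vec x /\ in_range A x.
Definition in_KA_dual (A : 'M[R]_n) (y : 'cV[R]_n) : Prop :=
  forall x, in_KA A x -> 0 <= (x^T *m y) 0 0.
(* interior of K_A^*, as given in the paper: {a + b : a > 0, b ∈ N(A^T)} *)
Definition in_int_KA_dual (A : 'M[R]_n) (d : 'cV[R]_n) : Prop :=
  exists a b : 'cV[R]_n, pos_vec a /\ in_null_tr A b /\ d = a + b.

Definition solves_LCP (A : 'M[R]_n) (q x : 'cV[R]_n) : Prop :=
  in_KA A x /\ in_KA_dual A (A *m x + q) /\ (x^T *m (A *m x + q)) 0 0 = 0.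

Definition karamardian (A : 'M[R]_n) : Prop :=
  (exists x, in_KA A x /\ x <> 0) /\
  exists d, in_int_KA_dual A d /\
    (forall x, solves_LCP A 0 x -> x = 0) /\
    (forall x, solves_LCP A d x -> x = 0).

End KaramardianDefs.

(* Main.v *)
Require Import Defs.
From mathcomp Require Import all_boot all_order all_algebra.
From mathcomp Require Import reals.
From mathcomp Require Import ring lra.
Import Order.TTheory GRing.Theory Num.Theory.
Set Implicit Arguments. Unset Strict Implicit. Unset Printing Implicit Defensive.
Local Open Scope ring_scope.

Section Helpers.
Variables (R : realType) (n : nat).
Implicit Types (A X : 'M[R]_n) (x y z d a b q : 'cV[R]_n).

Lemma pos_neq0 (k : R) : 0 < k -> k != 0.
Proof. by move=> h; rewrite gt_eqF. Qed.

Definition dot x y := (x^T *m y) 0 0.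

Lemma dotE x y : dot x y = \sum_i x i 0 * y i 0.
Proof. by rewrite /dot mxE; apply: eq_bigr => i _; rewrite mxE. Qed.

Lemma dotZr (k : R) x y : dot x (k *: y) = k * dot x y.
Proof. by rewrite !dotE mulr_sumr; apply: eq_bigr => i _; rewrite mxE mulrCA. Qed.

Lemma dotZl (k : R) x y : dot (k *: x) y = k * dot x y.
Proof. by rewrite !dotE mulr_sumr; apply: eq_bigr => i _; rewrite mxE mulrA. Qed.

Lemma dotDr x y y' : dot x (y + y') = dot x y + dot x y'.
Proof. by rewrite !dotE -big_split; apply: eq_bigr => i _; rewrite mxE mulrDr. Qed.

Lemma dot0r x : dot x 0 = 0.
Proof. by rewrite dotE big1 // => i _; rewrite mxE mulr0. Qed.

Lemma dot_pos x y i : nonneg_vec x -> nonneg_vec y -> 0 < x i 0 -> 0 < y i 0 ->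
  0 < dot x y.
Proof.
move=> hx hy xi yi; rewrite dotE (bigD1 i) //=.
have h1 : 0 <= \sum_(j | j != i) x j 0 * y j 0.
  by apply: sumr_ge0 => j _; apply: mulr_ge0.
have h2 := mulr_gt0 xi yi.
lra.
Qed.

Lemma nonneg_nz_pos z : nonneg_vec z -> z <> 0 -> exists i, 0 < z i 0.
Proof.
move=> hz nz; have [i Hi|H] := pickP (fun i => 0 < z i 0); first by exists i.
exfalso; apply: nz; apply/matrixP => i j; rewrite (ord1 j) mxE.
apply/eqP; rewrite eq_le hz andbT; have := H i; rewrite lt_def /= => /negbT.
by rewrite negb_and hz orbF negbK => /eqP ->.
Qed.

Lemma dot_null A x y b : x = A *m y -> A^T *m b = 0 -> dot x b = 0.
Proof. by move=> -> hb; rewrite /dot trmx_mul -mulmxA hb mulmx0 mxE. Qed.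

Lemma range_scale A (k : R) x : k != 0 -> in_range (k *: A) x <-> in_range A x.
Proof.
move=> kn; split => -[y ->].
  by exists (k *: y); rewrite -scalemxAl scalemxAr.
exists (k^-1 *: y); rewrite -scalemxAl -scalemxAr scalerA mulfV // scale1r //.
Qed.

Lemma KA_scale A (k : R) x : k != 0 -> in_KA (k *: A) x <-> in_KA A x.
Proof. by move=> kn; split => -[h1 h2]; split => //; apply/(range_scale _ _ kn). Qed.

Lemma LCP_scale A (k : R) q x : 0 < k ->
  solves_LCP (k *: A) (k *: q) x -> solves_LCP A q x.
Proof.
move=> kp [hK [hD hc]]; have kn : k != 0 by rewrite gt_eqF.
have E : (k *: A) *m x + k *: q = k *: (A *m x + q) by rewrite -scalemxAl scalerDr.
split; first by apply/(KA_scale _ _ kn).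
rewrite E in hD hc; split.
  move=> x' hx'; have := hD x' (proj2 (KA_scale _ _ kn) hx').
  by change (0 <= dot x' (k *: (A *m x + q)) -> 0 <= dot x' (A *m x + q));
    rewrite dotZr pmulr_rge0.
move: hc; change (dot x (k *: (A *m x + q)) = 0 -> dot x (A *m x + q) = 0).
by rewrite dotZr => /eqP; rewrite mulf_eq0 (negbTE kn) /= => /eqP.
Qed.

Lemma karam_scale A (k : R) : 0 < k -> karamardian A -> karamardian (k *: A).
Proof.
move=> kp [[z [hz nz]] [d [[a [b [ha [hb ->]]]] [h0 hd]]]].
have kn : k != 0 by rewrite gt_eqF.
split; first by exists z; split => //; apply/(KA_scale _ _ kn).
exists (k *: (a + b)); split.
  exists (k *: a), (k *: b); split; first by move=> i; rewrite mxE mulr_gt0.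
  split; last by rewrite scalerDr.
  rewrite /in_null_tr (_ : (k *: A)^T = k *: A^T); last by apply/matrixP => i j; rewrite !mxE.
  by rewrite -scalemxAl -scalemxAr hb !scaler0.
split.
  move=> x hx; apply: h0; apply: (@LCP_scale A k 0 x kp); by rewrite scaler0.
by move=> x hx; apply: hd; apply: (@LCP_scale A k _ x kp).
Qed.

Lemma karam_scale_iff A (k : R) : 0 < k -> karamardian (k *: A) <-> karamardian A.
Proof.
move=> kp; split; last exact: karam_scale.
move=> H; have kip : 0 < k^-1 by rewrite invr_gt0.
have := karam_scale kip H.
by rewrite scalerA mulVf ?scale1r // gt_eqF.
Qed.

Lemma rm_scale A (k : R) : 0 < k -> range_monotone A -> range_monotone (k *: A).
Proof.
move=> kp H x hn hr; have hr' := proj1 (@range_scale A k x (pos_neq0 kp)) hr.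
apply: (H x _ hr') => i.
by have := hn i; rewrite -scalemxAl mxE pmulr_rge0.
Qed.

Lemma ginv_form A X (c : R) : A *m A = c *: A -> A <> 0 -> is_group_inverse A X ->
  c != 0 /\ X = c^-2 *: A.
Proof.
move=> HA Anz [h1 [h2 h3]].
have E : A *m X *m A = c *: (A *m X).
  by rewrite -mulmxA -h3 mulmxA HA scalemxAl.
have cn : c != 0.
  by apply/eqP => c0; apply: Anz; rewrite -h1 E c0 scale0r.
split => //.
have E' : c *: (A *m X) = A by rewrite -E h1.
have AX : A *m X = c^-1 *: A.
  by rewrite -[in RHS]E' scalerA mulVf ?scale1r.
by rewrite -h2 -h3 AX -scalemxAl AX scalerA -invfM -expr2.
Qed.

Lemma ginv_exists A (c : R) : A *m A = c *: A -> c != 0 ->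
  is_group_inverse A (c^-2 *: A).
Proof.
move=> HA cn; rewrite /is_group_inverse.
have L : A *m (c^-2 *: A) = (c^-2 * c) *: A by rewrite -scalemxAr HA scalerA.
have L' : (c^-2 *: A) *m A = (c^-2 * c) *: A by rewrite -scalemxAl HA scalerA.
rewrite L L'; split.
  rewrite -scalemxAl HA scalerA.
  rewrite [X in X *: A = _](_ : _ = 1) ?scale1r //; field.
  by rewrite ?expf_neq0.
split => //; rewrite -scalemxAl L scalerA; congr (_ *: _); field.
by rewrite ?expf_neq0.
Qed.

Lemma rank1_facts A : \rank A = 1%N -> exists c (u : 'cV[R]_n),
  A *m A = c *: A /\ A <> 0 /\ (forall x, in_range A x -> exists t, x = t *: u).
Proof.
move=> rk.
have Anz : A <> 0 by move=> h; move: rk; rewrite h mxrank0.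
have : exists (C : 'M[R]_(n, \rank A)) (D : 'M[R]_(\rank A, n)), A = C *m D.
  by exists (col_base A), (row_base A); rewrite mulmx_base.
rewrite rk => -[u [w eA]]; rewrite eA.
exists ((w *m u) 0 0), u; split; last split.
- by rewrite mulmxA -(mulmxA u) {1}[w *m u]mx11_scalar mul_mx_scalar -scalemxAl.
- by rewrite -eA.
- move=> x [y ->]; exists ((w *m y) 0 0).
  by rewrite -mulmxA {1}[w *m y]mx11_scalar mul_mx_scalar.
Qed.

Lemma karam_c A (c : R) (u : 'cV[R]_n) : A *m A = c *: A ->
  (forall x, in_range A x -> exists t, x = t *: u) ->
  karamardian A -> 0 < c /\ range_monotone A.
Proof.
move=> HA HR [[z [[zn zr] znz]] [d [[a [b [ha [hb hd]]]] [h0 h1]]]].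
have Hz : forall x, in_range A x -> exists t, x = t *: z.
  move=> x /HR [t ->]; have [s zs] := HR z zr.
  have sn : s != 0 by apply/eqP => s0; apply: znz; rewrite zs s0 scale0r.
  by exists (t / s); rewrite zs scalerA divfK.
have Az : A *m z = c *: z.
  by case: zr => y ->; rewrite mulmxA HA scalemxAl.
have [i zi] := nonneg_nz_pos zn znz.
have cn : c != 0.
  apply/eqP => c0; apply: znz; apply: h0; split; first by split.
  rewrite addr0 Az c0 scale0r; split.
    by move=> x' _; change (0 <= dot x' 0); rewrite dot0r.
  by change (dot z 0 = 0); rewrite dot0r.
have cp : 0 < c.
  case: (ltgtP c 0) => [cneg|//|c0]; last by rewrite c0 eqxx in cn.
  exfalso.
  have an : nonneg_vec a by move=> j; apply: ltW.
  have zd : 0 < dot z d.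
    rewrite hd dotDr.
    have -> : dot z b = 0 by case: zr => y zy; apply: (dot_null zy).
    by rewrite addr0; apply: (dot_pos zn an zi (ha i)).
  have zz : 0 < dot z z by apply: (dot_pos zn zn zi zi).
  pose tau := - dot z d / (c * dot z z).
  have czz : c * dot z z < 0 by rewrite nmulr_rlt0.
  have taup : 0 < tau.
    by rewrite /tau mulrC nmulr_rgt0 ?invr_lt0 // oppr_lt0.
  have key : dot z (A *m (tau *: z) + d) = 0.
    rewrite -scalemxAr Az dotDr dotZr dotZr /tau.
    by field; rewrite cn andbT gt_eqF.
  have sol : solves_LCP A d (tau *: z).
    split; first split.
    - by move=> j; rewrite mxE mulr_ge0 // ltW.
    - by case: zr => y ->; exists (tau *: y); rewrite scalemxAr.
    split.
      move=> x' [_ xr]; have [s ->] := Hz x' xr.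
      by change (0 <= dot (s *: z) (A *m (tau *: z) + d)); rewrite dotZl key mulr0.
    by change (dot (tau *: z) (A *m (tau *: z) + d) = 0); rewrite dotZl key mulr0.
  have /eqP := h1 _ sol; rewrite scaler_eq0 => /orP [/eqP t0|/eqP z0].
    by move: taup; rewrite t0 ltxx.
  by apply: znz.
split => // x hn xr; have [t xt] := Hz x xr; rewrite xt in hn *.
have := hn i; rewrite -scalemxAr Az scalerA mxE => h.
have tp : 0 <= t.
  by move: h; rewrite -mulrA pmulr_lge0 // mulr_gt0.
by move=> j; rewrite mxE mulr_ge0.
Qed.

End Helpers.

Theorem mainTheorem7 (R : realType) (n : nat) (A : 'M[R]_n) :
  \rank A = 1%N ->
  (karamardian A -> exists X : 'M[R]_n, is_group_inverse A X) /\
  (forall X : 'M[R]_n, is_group_inverse A X ->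
     (karamardian A <-> karamardian X) /\
     (karamardian A -> range_monotone A /\ range_monotone X)).
Proof.
move=> rk; have [c [u [HA [Anz HR]]]] := rank1_facts rk.
split.
  move=> K; have [cp _] := karam_c HA HR K.
  by exists (c^-2 *: A); apply: ginv_exists => //; rewrite gt_eqF.
move=> X HX; have [cn ->] := ginv_form HA Anz HX.
have kp : 0 < c^-2 by rewrite invr_gt0 exprn_even_gt0.
split; first by split => H; [apply: karam_scale | apply/(karam_scale_iff _ kp)].
move=> K; have [_ rmA] := karam_c HA HR K.
by split => //; apply: rm_scale.
Qed.
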